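(* Let $S$ be a subcartesian space and let $S_{reg}$ be the set of all structurally regular points of $S$. Then $S_{reg}$ is open and dense in $S$.
   Context: A differential space (in the sense of Sikorski) is a set $S$ together with a family $C^\infty(S)$ of real-valued functions on $S$, with $S$ carrying the weakest topology making all $f\in C^\infty(S)$ continuous, such that $C^\infty(S)$ is closed under composition with smooth functions $F\in C^\infty(\mathbb{R}^k)$ (i.e. $F(f_1,\dots,f_k)\in C^\infty(S)$ for $f_i\in C^\infty(S)$), and such that any function on $S$ which near every point agrees with some element of $C^\infty(S)$ belongs to $C^\infty(S)$. A smooth map between differential spaces is one whose pull-back preserves smooth functions; a diffeomorphism is a smooth bijection with smooth inverse. Every subset $V$ of a differential space inherits a differential-space structure (a differential subspace); for $V\subseteq\mathbb{R}^n$, a function $f:V\to\mathbb{R}$ is smooth iff for each $x\in V$ there is a neighbourhood $U$ of $x$ in $\mathbb{R}^n$ and $f_x\in C^\infty(\mathbb{R}^n)$ with $f|_{U\cap V}=f_x|_{U\cap V}$. A subcartesian space is a Hausdorff differential space $S$ such that every point has an open neighbourhood diffeomorphic to a differential subspace (not necessarily open) of some $\mathbb{R}^n$. The structural dimension $n_x$ of $S$ at $x\in S$ is the smallest integer $n$ such that some open neighbourhood of $x$ in $S$ is diffeomorphic to a subset of $\mathbb{R}^n$. A point $x\in S$ is structurally regular if there is a neighbourhood $U$ of $x$ in $S$ with $n_y=n_x$ for all $y\in U$. *)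

(* Defs.v *)
From HB Require Import structures.
From mathcomp Require Import all_boot all_order all_algebra.
From mathcomp Require Import all_classical all_reals all_analysis.
Set Implicit Arguments. Unset Strict Implicit. Unset Printing Implicit Defensive.
Import Order.TTheory GRing.Theory Num.Theory.
Import numFieldNormedType.Exports.
Local Open Scope classical_set_scope.
Local Open Scope ring_scope.

Section Subcartesian.
Variable R : realType.

Fixpoint Ck (n k : nat) (F : 'rV[R]_n -> R) : Prop :=
  match k with
  | 0 => continuous F
  | k'.+1 => (forall (x v : 'rV[R]_n), derivable F x v) /\
             (forall v : 'rV[R]_n, Ck k' ('D_v F))
  end.

Definition smooth_Rn (n : nat) (F : 'rV[R]_n -> R) : Prop := forall k, Ck k F.

(* The weakest topology on S making all f in C continuous: a set A is open iff
   around each of its points it contains a basic set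
   { y | |f_i y - f_i x| < eps for i < k } with f_i in C. *)
Definition dopen (S : Type) (C : set (S -> R)) (A : set S) : Prop :=
  forall x, A x -> exists (k : nat) (fs : 'I_k -> S -> R) (eps : R),
    (forall i, C (fs i)) /\ 0 < eps /\
    (forall y, (forall i, `|fs i y - fs i x| < eps) -> A y).

Definition differential_space (S : Type) (C : set (S -> R)) : Prop :=
  (forall (k : nat) (F : 'rV[R]_k -> R) (fs : 'I_k -> S -> R),
      smooth_Rn F -> (forall i, C (fs i)) ->
      C (fun x => F (\row_i fs i x))) /\
  (forall g : S -> R,
      (forall x, exists U, dopen C U /\ U x /\
         exists f, C f /\ forall y, U y -> g y = f y) -> C g).

(* Smooth functions on the differential subspace W of S (values off W irrelevant). *)
Definition sub_smooth (S : Type) (C : set (S -> R)) (W : set S) (f : S -> R) : Prop :=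
  forall x, W x -> exists U, dopen C U /\ U x /\
    exists g, C g /\ forall y, U y -> W y -> f y = g y.

Definition Rn_sub_smooth (n : nat) (V : set 'rV[R]_n) (f : 'rV[R]_n -> R) : Prop :=
  forall x, V x -> exists U : set 'rV[R]_n, open U /\ U x /\
    exists g, smooth_Rn g /\ forall y, U y -> V y -> f y = g y.

Definition diffeomorphic (S : Type) (C : set (S -> R)) (W : set S)
    (n : nat) (V : set 'rV[R]_n) : Prop :=
  exists (phi : S -> 'rV[R]_n) (psi : 'rV[R]_n -> S),
    (forall x, W x -> V (phi x)) /\ (forall y, V y -> W (psi y)) /\
    (forall x, W x -> psi (phi x) = x) /\ (forall y, V y -> phi (psi y) = y) /\
    (forall h, Rn_sub_smooth V h -> sub_smooth C W (h \o phi)) /\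
    (forall f, sub_smooth C W f -> Rn_sub_smooth V (f \o psi)).

Definition dhausdorff (S : Type) (C : set (S -> R)) : Prop :=
  forall x y : S, x <> y -> exists U V, dopen C U /\ dopen C V /\ U x /\ V y /\
    (forall z, U z -> V z -> False).

Definition embeds_at (S : Type) (C : set (S -> R)) (x : S) (n : nat) : Prop :=
  exists W, dopen C W /\ W x /\ exists V : set 'rV[R]_n, diffeomorphic C W V.

Definition subcartesian (S : Type) (C : set (S -> R)) : Prop :=
  differential_space C /\ dhausdorff C /\ forall x, exists n, embeds_at C x n.

Definition struct_dim (S : Type) (C : set (S -> R)) (x : S) (n : nat) : Prop :=
  embeds_at C x n /\ forall m, embeds_at C x m -> (n <= m)%N.

Definition struct_regular (S : Type) (C : set (S -> R)) (x : S) : Prop :=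
  exists n, struct_dim C x n /\
    exists U, dopen C U /\ U x /\ forall y, U y -> struct_dim C y n.

End Subcartesian.

(* Main.v *)
Require Import Defs.
From mathcomp Require Import all_boot all_order all_algebra.
From mathcomp Require Import all_classical all_reals all_analysis.
Import Order.TTheory GRing.Theory Num.Theory.
Local Open Scope classical_set_scope.
Local Open Scope ring_scope.

Lemma dopenI (R : realType) (S : Type) (C : set (S -> R)) (A B : set S) :
  dopen C A -> dopen C B -> dopen C (fun x => A x /\ B x).
Proof.
move=> hA hB x [Ax Bx].
have [k1 [f1 [e1 [C1 [e1p H1]]]]] := hA x Ax.
have [k2 [f2 [e2 [C2 [e2p H2]]]]] := hB x Bx.
exists (k1 + k2)%N.
exists (fun i => match fintype.split i with inl j => f1 j | inr j => f2 j end).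
exists (Num.min e1 e2); split; [|split].
- by move=> i; case: (fintype.split i).
- by rewrite lt_min e1p e2p.
- move=> y Hy; split.
  + apply: H1 => j; have := Hy (lshift k2 j).
    rewrite -[lshift k2 j]/(unsplit (inl j)) unsplitK lt_min => /andP[] //.
  + apply: H2 => j; have := Hy (rshift k1 j).
    rewrite -[rshift k1 j]/(unsplit (inr j)) unsplitK lt_min => /andP[] //.
Qed.

Lemma min_exists (P : nat -> Prop) : (exists n, P n) ->
  exists m, P m /\ forall n, P n -> (m <= n)%N.
Proof.
move=> [n Pn].
have exP : exists n, `[< P n >] by exists n; apply/asboolP.
case: (ex_minnP exP) => m /asboolP Pm Hm.
exists m; split => // k Pk; apply: Hm; exact/asboolP.
Qed.

Theorem mainTheorem1 (R : realType) (S : Type) (C : set (S -> R)) :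
  subcartesian C ->
  dopen C (struct_regular C) /\
  (forall A : set S, dopen C A -> (exists x, A x) ->
     exists x, A x /\ struct_regular C x).
Proof.
move=> [_ [_ Hemb]]; split.
- move=> x [n [dx [U [oU [Ux HU]]]]].
  have [k [fs [e [Cf [ep Hf]]]]] := oU x Ux.
  exists k, fs, e; split => //; split => // y Hy.
  have Uy := Hf y Hy.
  exists n; split; first exact: HU.
  by exists U.
- move=> A oA [x Ax].
  have [m [[y [Ay ey]] Hm]] :=
    @min_exists (fun m => exists y, A y /\ embeds_at C y m)
      (let: ex_intro n hn := Hemb x in ex_intro _ n (ex_intro _ x (conj Ax hn))).
  exists y; split => //.
  have [W [oW [Wy HV]]] := ey.
  have dz : forall z, A z -> W z -> struct_dim C z m.
    move=> z Az Wz; split; first by exists W.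
    by move=> m' em'; apply: Hm; exists z.
  exists m; split; first exact: dz.
  exists (fun z => A z /\ W z); split; first exact: dopenI.
  split => //.
  by move=> z [Az Wz]; apply: dz.
Qed.
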